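(* Let $k \ge 1$ be an integer, let $H$ be a graph, and let $x_1,\dots,x_k,y_1,\dots,y_k$ be $2k$ distinct vertices of $H$. If $\tau(H) \ge 4k-3$, then $H$ contains a matching $\{m_1,\dots,m_k\}$ of size $k$ such that $m_i \cap \{x_j,y_j\} = \emptyset$ for all $i \neq j$.
   Context: All graphs are finite and simple. $\tau(H)$ denotes the vertex cover number of $H$ (minimum size of a vertex set meeting every edge of $H$). Edges are regarded as 2-element vertex sets. *)

(* Defs.v *)
From mathcomp Require Import all_boot.
Set Implicit Arguments. Unset Strict Implicit. Unset Printing Implicit Defensive.

(* A finite simple graph: vertex type T : finType, adjacency e : rel T,
   symmetric and irreflexive. Edges are 2-element sets {u,v} with e u v. *)
Definition simple_graph (T : finType) (e : rel T) : Prop :=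
  symmetric e /\ irreflexive e.

Definition is_vcover (T : finType) (e : rel T) (C : {set T}) : bool :=
  [forall u, forall v, e u v ==> (u \in C) || (v \in C)].

(* Vertex cover number: minimum size of a vertex cover (setT is always one). *)
Definition tau (T : finType) (e : rel T) : nat :=
  \big[minn/#|T|]_(C : {set T} | is_vcover e C) #|C|.

(* A matching of size k, given as k edges m i = {(m i).1, (m i).2}
   whose 2k endpoints are pairwise distinct. *)
Definition is_matching (T : finType) (e : rel T) (k : nat)
  (m : 'I_k -> T * T) : Prop :=
  (forall i, e (m i).1 (m i).2) /\
  injective (fun p : 'I_k + 'I_k =>
               match p with inl i => (m i).1 | inr i => (m i).2 end).

(* Main.v *)
Require Import Defs.
From mathcomp Require Import all_boot.

Lemma bigmin_le (I : finType) (P : pred I) (F : I -> nat) m c :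
  P c -> \big[minn/m]_(i | P i) F i <= F c.
Proof.
move=> Pc; rewrite -big_filter.
have: c \in [seq i <- index_enum I | P i] by rewrite mem_filter Pc mem_index_enum.
elim: [seq _ <- _ | _] => [|a s IH] //=.
rewrite big_cons inE => /orP [/eqP->|/IH H]; first exact: geq_minl.
exact: leq_trans (geq_minr _ _) H.
Qed.

Lemma edge_avoid (T : finType) (e : rel T) (F : {set T}) :
  #|F| < tau e -> exists u v, [/\ e u v, u \notin F & v \notin F].
Proof.
move=> H.
case: (boolP (is_vcover e F)) => [C|NC].
  have L : tau e <= #|F| by rewrite /tau; apply: bigmin_le.
  by move: (leq_ltn_trans L H); rewrite ltnn.
move/forallPn: NC => [u /forallPn [v]]; rewrite negb_imply negb_or.
by case/andP=> Huv /andP [Hu Hv]; exists u, v.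
Qed.

From mathcomp Require Import zify.
Set Implicit Arguments. Unset Strict Implicit.

Definition Inv (T : finType) (e : rel T) k (x y : 'I_k -> T) n
  (m : 'I_k -> T * T) := forall i : 'I_k, i < n ->
 [/\ e (m i).1 (m i).2,
     forall j, j != i ->
       [/\ (m i).1 != x j, (m i).1 != y j, (m i).2 != x j & (m i).2 != y j] &
     forall i' : 'I_k, i' < i ->
       [/\ (m i).1 != (m i').1, (m i).1 != (m i').2,
           (m i).2 != (m i').1 & (m i).2 != (m i').2]].

Lemma step (T : finType) (e : rel T) k (x y : 'I_k -> T) n m :
  n < k -> 4 * k - 3 <= tau e -> Inv e x y n m ->
  exists m', Inv e x y n.+1 m'.
Proof.
move=> nk ht Hm.
pose i0 := Ordinal nk.
pose S := [set i : 'I_k | i < n].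
pose F := x @: [set~ i0] :|: y @: [set~ i0] :|:
          (fun i => (m i).1) @: S :|: (fun i => (m i).2) @: S.
have cS : #|S| <= k.-1.
  have -> : k.-1 = #|[set~ i0]| by rewrite cardsC1 card_ord.
  apply: subset_leq_card.
  apply/subsetP => i; rewrite !inE => lt; apply/eqP => E.
  by move: lt; rewrite E /= ltnn.
have cC : #|[set~ i0]| <= k.-1 by rewrite cardsC1 card_ord.
have cF : #|F| < tau e.
  have h1 := leq_imset_card x [set~ i0].
  have h2 := leq_imset_card y [set~ i0].
  have h3 := leq_imset_card (fun i => (m i).1) S.
  have h4 := leq_imset_card (fun i => (m i).2) S.
  have u1 := (leq_card_setU (x @: [set~ i0] :|: y @: [set~ i0] :|:
          (fun i => (m i).1) @: S) ((fun i => (m i).2) @: S)).1.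
  have u2 := (leq_card_setU (x @: [set~ i0] :|: y @: [set~ i0])
          ((fun i => (m i).1) @: S)).1.
  have u3 := (leq_card_setU (x @: [set~ i0]) (y @: [set~ i0])).1.
  rewrite -subn1 in cS cC; rewrite /F. lia.
have [u [v [Huv Hu Hv]]] := @edge_avoid _ _ _ cF.
rewrite /F !in_setU !negb_or in Hu Hv.
move/andP: Hu => [/andP [/andP [Hu1 Hu2] Hu3] Hu4].
move/andP: Hv => [/andP [/andP [Hv1 Hv2] Hv3] Hv4].
exists (fun i => if i == i0 then (u, v) else m i).
move=> i; rewrite ltnS leq_eqVlt => /orP [/eqP ein | ilt].
  have -> : i = i0 by apply: val_inj.
  rewrite eqxx /=; split => //.
    move=> j nj; have jC : j \in [set~ i0] by rewrite in_setC1.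
    split.
    - by apply: contraNneq Hu1 => ->; apply: imset_f.
    - by apply: contraNneq Hu2 => ->; apply: imset_f.
    - by apply: contraNneq Hv1 => ->; apply: imset_f.
    - by apply: contraNneq Hv2 => ->; apply: imset_f.
  move=> i' lt.
  have ni : i' != i0 by apply/eqP => E; move: lt; rewrite E ltnn.
  have iS : i' \in S by rewrite inE.
  rewrite (negbTE ni); split.
  - by apply: contraNneq Hu3 => ->; apply: (imset_f (fun i => (m i).1)).
  - by apply: contraNneq Hu4 => ->; apply: (imset_f (fun i => (m i).2)).
  - by apply: contraNneq Hv3 => ->; apply: (imset_f (fun i => (m i).1)).
  - by apply: contraNneq Hv4 => ->; apply: (imset_f (fun i => (m i).2)).
have ni : i != i0 by apply/eqP => E; move: ilt; rewrite E ltnn.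
rewrite (negbTE ni).
have [H1 H2 H3] := Hm i ilt.
split => // i' lt.
have ni' : i' != i0 by apply/eqP => E; move: lt ilt; rewrite E /= => a b;
  move: (ltn_trans a b); rewrite ltnn.
by rewrite (negbTE ni'); apply: H3.
Qed.

Lemma build (T : finType) (e : rel T) k (x y : 'I_k -> T) n :
  n <= k -> 4 * k - 3 <= tau e -> exists m, Inv e x y n m.
Proof.
move=> + ht; elim: n => [|n IH] nk.
  by exists (fun i => (x i, x i)).
have [m Hm] := IH (ltnW nk).
exact: step nk ht Hm.
Qed.

Theorem mainTheorem13 (T : finType) (e : rel T) (k : nat)
  (x y : 'I_k -> T) :
  simple_graph e ->
  1 <= k ->
  injective (fun p : 'I_k + 'I_k =>
               match p with inl i => x i | inr i => y i end) ->
  4 * k - 3 <= tau e ->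
  exists m : 'I_k -> T * T,
    is_matching e m /\
    (forall i j : 'I_k, i != j ->
       [/\ (m i).1 != x j, (m i).1 != y j, (m i).2 != x j & (m i).2 != y j]).
Proof.
move=> [sym irr] k1 _ ht.
have [m Hm] := build x y (leqnn k) ht.
exists m; split; last first.
  by move=> i j ij; have [_ H _] := Hm i (ltn_ord i); apply: H; rewrite eq_sym.
split; first by move=> i; have [H _ _] := Hm i (ltn_ord i).
have irrm : forall i, (m i).1 != (m i).2.
  move=> i; have [H _ _] := Hm i (ltn_ord i).
  by apply/eqP => E; move: H; rewrite E irr.
move=> [i|i] [j|j] /= E.
- case: (ltngtP i j) => [lt|lt|/val_inj ->] //.
    by have [_ _ /(_ i lt) [H _ _ _]] := Hm j (ltn_ord j); move: H; rewrite E eqxx.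
  by have [_ _ /(_ j lt) [H _ _ _]] := Hm i (ltn_ord i); move: H; rewrite E eqxx.
- case: (ltngtP i j) => [lt|lt|/val_inj eij].
  + by have [_ _ /(_ i lt) [_ _ H _]] := Hm j (ltn_ord j); move: H; rewrite E eqxx.
  + by have [_ _ /(_ j lt) [_ H _ _]] := Hm i (ltn_ord i); move: H; rewrite E eqxx.
  + by move: (irrm i); rewrite E eij eqxx.
- case: (ltngtP i j) => [lt|lt|/val_inj eij].
  + by have [_ _ /(_ i lt) [_ H _ _]] := Hm j (ltn_ord j); move: H; rewrite E eqxx.
  + by have [_ _ /(_ j lt) [_ _ H _]] := Hm i (ltn_ord i); move: H; rewrite E eqxx.
  + by move: (irrm j); rewrite -E eij eqxx.
- case: (ltngtP i j) => [lt|lt|/val_inj ->] //.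
    by have [_ _ /(_ i lt) [_ _ _ H]] := Hm j (ltn_ord j); move: H; rewrite E eqxx.
  by have [_ _ /(_ j lt) [_ _ _ H]] := Hm i (ltn_ord i); move: H; rewrite E eqxx.
Qed.
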